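(* Let $k$ be a difference field of characteristic $0$ and $R=k\{y_1,\ldots,y_n\}$. If $I$ is a monomial $\sigma$-ideal of $R$, then its radical well-mixed closure $\langle I\rangle_r$ is also a monomial $\sigma$-ideal.
   Context: A difference field is a field $k$ with a ring endomorphism $\sigma$; $R=k\{y_1,\ldots,y_n\}$ is the polynomial ring over $k$ in the variables $\sigma^j(y_i)$, with $\sigma$ extended naturally. For $p=\sum_ic_ix^i\in\mathbb{N}[x]$ and $a\in R$, $a^p=\prod_i(\sigma^i(a))^{c_i}$; monomials are $\mathbf{y}^{\mathbf{u}}=y_1^{u_1}\cdots y_n^{u_n}$ with $\mathbf{u}\in\mathbb{N}[x]^n$. A $\sigma$-ideal is an ideal stable under $\sigma$; monomial if generated by monomials; well-mixed if $ab\in I\Rightarrow a\sigma(b)\in I$. $\langle I\rangle_r$ is the smallest radical well-mixed $\sigma$-ideal containing $I$. *)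

(* Defs.v *)
From HB Require Import structures.
From mathcomp Require Import all_boot all_order all_algebra.
From mathcomp Require Import finmap.
From mathcomp.multinomials Require Import monalg.
Set Implicit Arguments. Unset Strict Implicit. Unset Printing Implicit Defensive.
Import GRing.Theory.
Local Open Scope ring_scope.

(* Index set of the difference variables: (i, j) stands for sigma^j(y_i),
   with i : 'I_n (the n difference indeterminates y_1..y_n) and j : nat. *)
Definition dvar (n : nat) := ('I_n * nat)%type.

Definition dmonom (n : nat) := {cmonom (dvar n)}.

(* The difference polynomial ring R = k{y_1,...,y_n}: the polynomial ring
   over k in the (infinitely many) variables sigma^j(y_i). *)
Definition dpoly (k : fieldType) (n : nat) := {malg k[dmonom n]}.

(* Shift of a monomial: sigma^j(y_i) |-> sigma^(j+1)(y_i). *)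
Definition shiftcm (n : nat) (m : dmonom n) : dmonom n :=
  \big[@mulcm _/@onecm _]_(x <- finsupp m) expcmn (ucm (x.1, x.2.+1)) (m x).

Definition sigmaR (k : fieldType) (sigma : {rmorphism k -> k}) (n : nat)
  (p : dpoly k n) : dpoly k n :=
  \sum_(m <- msupp p) << sigma (p@_m) *g shiftcm m >>.

Definition is_monomial (k : fieldType) (n : nat) (p : dpoly k n) : Prop :=
  exists u : dmonom n, p = << u >>.

Definition is_ideal (R : comRingType) (I : R -> Prop) : Prop :=
  [/\ I 0, (forall x y, I x -> I y -> I (x + y)) & (forall r x, I x -> I (r * x))].

Definition ideal_gen (R : comRingType) (S : R -> Prop) (x : R) : Prop :=
  exists rs : seq (R * R),
    (forall p, p \in rs -> S p.2) /\ x = \sum_(p <- rs) p.1 * p.2.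

Definition is_sigma_ideal (R : comRingType) (s : R -> R) (I : R -> Prop) :=
  is_ideal I /\ (forall x, I x -> I (s x)).

Definition well_mixed (R : comRingType) (s : R -> R) (I : R -> Prop) :=
  forall a b, I (a * b) -> I (a * s b).

Definition radical (R : comRingType) (I : R -> Prop) :=
  forall a (e : nat), I (a ^+ e) -> I a.

(* Monomial ideal: generated by monomials (equivalently, by the monomials
   it contains). *)
Definition monomial_ideal (k : fieldType) (n : nat) (I : dpoly k n -> Prop) :=
  forall x, I x <-> ideal_gen (fun m => I m /\ is_monomial m) x.

Definition rwm_closure (R : comRingType) (s : R -> R) (I : R -> Prop) (x : R) :=
  forall J : R -> Prop, is_sigma_ideal s J -> well_mixed s J -> radical J ->
    (forall y, I y -> J y) -> J x.

(* Main.v *)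
Require Import Defs.
From HB Require Import structures.
From mathcomp Require Import all_boot all_order all_algebra.
From mathcomp Require Import finmap.
From mathcomp.multinomials Require Import monalg.
Set Implicit Arguments. Unset Strict Implicit. Unset Printing Implicit Defensive.
Import GRing.Theory.
Local Open Scope ring_scope.
Local Open Scope fset_scope.
Ltac done := solve [ reflexivity | Corelib.ssr.ssreflect.done ].
Local Notation "1" := (@mone _) : monom_scope.
Local Notation "x * y" := (mmul x y) : monom_scope.

Definition mm n (u v : dmonom n) : dmonom n := (u * v)%M.

Lemma mmE n (u v : dmonom n) i : mm u v i = (u i + v i)%N.
Proof. exact: cmM. Qed.

Lemma mU_mul (k : fieldType) n (u v : dmonom n) :
  (<< u >> : dpoly k n) * << v >> = << mm u v >>.
Proof. by rewrite malgM_def fgmulUU mulr1. Qed.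

Lemma mcoeffU_scal (k : fieldType) n (c : k) (u w : dmonom n) :
  << c *g u >>@_w = c * (<< (1:k) *g u >> : dpoly k n)@_w.
Proof. rewrite [in RHS]mcoeffU [in LHS]mcoeffU. by rewrite mulr_natr. Qed.

Lemma mU_scal (k : fieldType) n (c : k) (u : dmonom n) :
  (<< c *g u >> : dpoly k n) = malgC c * << u >>.
Proof. by rewrite mul_malgC; apply/malgP => w; rewrite mcoeffZ; exact: mcoeffU_scal. Qed.

Lemma mono_decomp (k : fieldType) n (x : dpoly k n) :
  x = \sum_(u <- msupp x) (malgC (x@_u)) * << u >>.
Proof. by rewrite {1}(monalgE x); apply: eq_bigr => u _; rewrite mU_scal. Qed.

Lemma msupp_sum (k : fieldType) n (T : Type) (r : seq T) (F : T -> dpoly k n) u :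
  u \in msupp (\sum_(t <- r) F t) -> exists t, (u \in msupp (F t)).
Proof.
elim: r => [|t r IH]; first by rewrite big_nil msupp0 in_fset0.
rewrite big_cons => /(fsubsetP (msuppD_le _ _)); rewrite in_fsetU => /orP [h|/IH //].
by exists t.
Qed.

Section Gen.
Variables (R : comRingType) (s : R -> R) (I : R -> Prop).
Let C := rwm_closure s I.

Lemma C_ideal : is_ideal C.
Proof.
split.
- by move=> J [[J0 _ _] _].
- by move=> x y Cx Cy J hJ wJ rJ IJ; case: (hJ) => [[_ hD _] _]; apply: hD; [apply: Cx|apply: Cy].
- by move=> r x Cx J hJ wJ rJ IJ; case: (hJ) => [[_ _ hM] _]; apply: hM; apply: Cx.
Qed.

Lemma C_sigma x : C x -> C (s x).
Proof. by move=> Cx J hJ wJ rJ IJ; case: (hJ) => [_ hs]; apply: hs; apply: Cx. Qed.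

Lemma C_wm : well_mixed s C.
Proof. by move=> a b Cab J hJ wJ rJ IJ; exact: (wJ a b (Cab J hJ wJ rJ IJ)). Qed.

Lemma C_rad : radical C.
Proof. by move=> a e Cab J hJ wJ rJ IJ; exact: (rJ a e (Cab J hJ wJ rJ IJ)). Qed.

Lemma C_incl y : I y -> C y.
Proof. by move=> Iy J _ _ _ IJ; apply: IJ. Qed.
End Gen.

Section Gen2.
Variables (R : comRingType).
Lemma ideal_sum (J : R -> Prop) (T : eqType) (r : seq T) (F : T -> R) :
  is_ideal J -> (forall t, t \in r -> J (F t)) -> J (\sum_(t <- r) F t).
Proof.
move=> [J0 JD JM]; elim: r => [|t r IH] HF; first by rewrite big_nil.
rewrite big_cons; apply: JD; first by apply: HF; rewrite inE eqxx.
by apply: IH => t' ht'; apply: HF; rewrite inE ht' orbT.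
Qed.

Lemma ideal_gen_ideal (S : R -> Prop) : is_ideal (ideal_gen S).
Proof.
split.
- by exists [::]; split => //; rewrite big_nil.
- move=> x y [rx [hx ->]] [ry [hy ->]]; exists (rx ++ ry); split.
    by move=> p; rewrite mem_cat => /orP [/hx|/hy].
  by rewrite big_cat.
- move=> r x [rx [hx ->]]; exists [seq (r * p.1, p.2) | p <- rx]; split.
    by move=> p /mapP [q /hx hq ->].
  by rewrite big_map mulr_sumr; apply: eq_bigr => p _; rewrite mulrA.
Qed.

Lemma ideal_gen_min (S J : R -> Prop) : is_ideal J -> (forall m, S m -> J m) ->
  forall x, ideal_gen S x -> J x.
Proof.
move=> hJ SJ x [rx [hx ->]]; apply: ideal_sum => // p /hx /SJ.
by case: hJ => J0 JD JM; apply: JM.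
Qed.

Lemma ideal_gen_gen (S : R -> Prop) m : S m -> ideal_gen S m.
Proof.
move=> Sm; exists [:: (1, m)]; split; last by rewrite big_seq1 mul1r.
by move=> p; rewrite inE => /eqP ->.
Qed.
End Gen2.

Definition Cl (k : fieldType) (sigma : {rmorphism k -> k}) n (I : dpoly k n -> Prop) :=
  rwm_closure (sigmaR sigma (n:=n)) I.
Definition Jg (k : fieldType) (sigma : {rmorphism k -> k}) n (I : dpoly k n -> Prop) :=
  ideal_gen (fun m => Cl sigma I m /\ is_monomial m).

Section Main1.
Variables (k : fieldType) (sigma : {rmorphism k -> k}) (n : nat) (I : dpoly k n -> Prop).
Local Notation s := (sigmaR sigma (n:=n)).
Local Notation C := (Cl sigma I).
Local Notation J := (Jg sigma I).

Lemma C_idealK : is_ideal C. Proof. exact: C_ideal. Qed.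

Lemma Mo_mul (u v : dmonom n) : C << u >> -> C << mm v u >>.
Proof. by move=> Cu; rewrite -mU_mul; case: C_idealK => _ _; apply. Qed.

Lemma one_mU : (1%R : dpoly k n) = << 1%M >>.
Proof. by []. Qed.

Lemma pow_mU (u : dmonom n) (N : nat) :
  exists v : dmonom n, (<< u >> : dpoly k n) ^+ N = << v >> /\ forall i, v i = (N * u i)%N.
Proof.
elim: N => [|N [v [ev hv]]].
  by exists 1%M; split; [rewrite expr0 | move=> i; rewrite cm1].
exists (mm u v); split.
 by rewrite exprS ev mU_mul.
by move=> i; rewrite mmE hv mulSn.
Qed.

Lemma le_mdeg (w : dmonom n) i : (w i <= mdeg w)%N.
Proof.
case hi: (i \in finsupp w); last by move/negbT: hi; rewrite -cmE_eq0 => /eqP ->.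
rewrite mdegE (bigD1_seq i) ?fset_uniq //=; exact: leq_addr.
Qed.

Lemma Mo_div (u w : dmonom n) : C << w >> -> finsupp w `<=` finsupp u -> C << u >>.
Proof.
move=> Cw /fsubsetP sw.
have [v [ev hv]] := pow_mU u (mdeg w).
apply: (@C_rad _ _ _ _ (mdeg w)); rewrite ev.
have -> : v = mm (divcm v w) w.
  apply/eqP/cmP => i; rewrite mmE divcmE hv subnK //.
  case hi: (i \in finsupp w); last by move/negbT: hi; rewrite -cmE_eq0 => /eqP ->.
  have : i \in finsupp u by apply: sw.
  rewrite -cmE_neq0 -lt0n => hu.
  apply: (leq_trans (le_mdeg w i)); rewrite -{1}[mdeg w]muln1; exact: leq_mul.
exact: Mo_mul.
Qed.

Lemma J_supp x : J x -> forall u, u \in msupp x -> C << u >>.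
Proof.
move=> Jx; move: x Jx; apply: (ideal_gen_min (J := fun x => forall u, u \in msupp x -> C << u >>)).
- split.
  + by move=> u; rewrite msupp0 in_fset0.
  + move=> x1 x2 h1 h2 u /(fsubsetP (msuppD_le _ _)); rewrite in_fsetU => /orP [/h1|/h2] //.
  + move=> r y hy u /msuppM_le [k1 [k2 [_ k2y ->]]]; exact: (Mo_mul k1 (hy _ k2y)).
- move=> m [Cm [w em]] u; rewrite em msuppU1 in_fset1 => /eqP ->.
  by rewrite -em.
Qed.

Lemma supp_J x : (forall u, u \in msupp x -> C << u >>) -> J x.
Proof.
move=> h; rewrite (mono_decomp x); apply: ideal_sum; first exact: ideal_gen_ideal.
move=> u /h Cu; case: (ideal_gen_ideal (fun m => C m /\ is_monomial m)) => _ _; apply.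
by apply: ideal_gen_gen; split => //; exists u.
Qed.

Lemma J_I y : monomial_ideal I -> I y -> J y.
Proof.
move=> mI /mI; apply: ideal_gen_min; first exact: ideal_gen_ideal.
move=> m [Im mm]; apply: ideal_gen_gen; split => //; exact: C_incl.
Qed.

Lemma s_U (v : dmonom n) : s << v >> = << shiftcm v >>.
Proof.
by rewrite /sigmaR msuppU1 big_seq_fset1 mcoeffUU rmorph1.
Qed.

Lemma J_sigma x : J x -> J (s x).
Proof.
move=> Jx; apply: supp_J => u; rewrite /sigmaR => /msupp_sum [v].
case vx: (v \in msupp x); last first.
  by move/negbT: vx; rewrite -mcoeff_eq0 => /eqP ->; rewrite rmorph0 monalgU0 msupp0 in_fset0.
move=> /(fsubsetP msuppU_le); rewrite in_fset1 => /eqP ->.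
rewrite -s_U; apply: C_sigma; exact: J_supp vx.
Qed.
Lemma J_term (A B : k) (u w : dmonom n) : C << mm u w >> ->
  J ((malgC A * << u >>) * (malgC B * << w >>)).
Proof.
move=> Cuw; apply: supp_J => t /msuppM_le [k1 [k2 [h1 h2 ->]]].
rewrite mul_malgC in h1; move/(fsubsetP (msuppZ_le _ _)) in h1.
rewrite mul_malgC in h2; move/(fsubsetP (msuppZ_le _ _)) in h2.
rewrite msuppU1 in_fset1 in h1; rewrite msuppU1 in_fset1 in h2.
move/eqP: h1 => ->; move/eqP: h2 => ->; exact: Cuw.
Qed.
End Main1.

From mathcomp.multinomials Require Import mpoly.
From Stdlib Require Import Classical.

Lemma sum_delta (R : zmodType) (T : eqType) (r : seq T) (u : T) (F : T -> R) :
  uniq r -> \sum_(w <- r) (if w == u then F w else 0) = if u \in r then F u else 0.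
Proof.
elim: r => [|a r IH]; first by rewrite big_nil.
rewrite /= big_cons inE => /andP [ar ur]; rewrite IH //.
case: (eqVneq a u) => [<-|ne]; first by rewrite /= (negbTE ar) addr0.
by rewrite add0r.
Qed.

Definition Vs (n : nat) (z : dmonom n) : seq (dvar n) := finsupp z.

Definition mkm (n : nat) (z : dmonom n) (w : dmonom n) : mpoly.multinom (size (Vs z)) :=
  mpoly.Multinom [tuple w (tnth (in_tuple (Vs z)) i) | i < size (Vs z)].

Definition hV (k : fieldType) (n : nat) (z : dmonom n) (w : dmonom n) :
  mpoly.mpoly (size (Vs z)) k :=
  if finsupp w `<=` finsupp z then mpoly.mpolyX k (mkm z w) else 0.

Lemma mkmE n (z w : dmonom n) i : mpoly.fun_of_multinom (mkm z w) i = w (tnth (in_tuple (Vs z)) i).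
Proof. by rewrite /mkm /mpoly.fun_of_multinom /= tnth_mktuple. Qed.

Lemma hV_mul k n (z : dmonom n) : {morph hV k z : x y / (x * y)%M >-> (x * y)%R}.
Proof.
move=> w1 w2; rewrite /hV mdomD fsubUset.
case: (finsupp w1 `<=` finsupp z); case: (finsupp w2 `<=` finsupp z);
  rewrite ?mulr0 ?mul0r //=.
rewrite -mpoly.mpolyXD; congr mpoly.mpolyX; apply/mpoly.mnmP => i.
by rewrite mpoly.mnmDE !mkmE cmM.
Qed.

Lemma hV1 k n (z : dmonom n) : hV k z 1%M = 1.
Proof.
rewrite /hV mdom1 fsub0set -(mpoly.mpolyX0 _ k); congr mpoly.mpolyX.
by apply/mpoly.mnmP => i; rewrite mpoly.mnm0E mkmE cm1.
Qed.

HB.instance Definition _ (k : fieldType) (n : nat) (z : dmonom n) :=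
  isMultiplicative.Build (dmonom n) (mpoly.mpoly (size (Vs z)) k) (hV k z) (hV_mul k z, hV1 k z).

Definition psi (k : fieldType) (n : nat) (z : dmonom n) :=
  monalg.mmap (mpoly.mpolyC (size (Vs z)) (R := k)) (hV k z).


Lemma mkm_inj n (z u w : dmonom n) : finsupp u `<=` finsupp z -> finsupp w `<=` finsupp z ->
  mkm z u = mkm z w -> u = w.
Proof.
move=> /fsubsetP su /fsubsetP sw e; apply/eqP/cmP => x.
case xz: (x \in finsupp z); last first.
  have /negbT nu : (x \in finsupp u) = false by apply/negbTE/negP => /su; rewrite xz.
  have /negbT nw : (x \in finsupp w) = false by apply/negbTE/negP => /sw; rewrite xz.
  by rewrite -cmE_eq0 in nu; rewrite -cmE_eq0 in nw; rewrite (eqP nu) (eqP nw).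
have xV : x \in Vs z by [].
have hi : (index x (Vs z) < size (Vs z))%N by rewrite index_mem.
have := congr1 (fun m => mpoly.fun_of_multinom m (Ordinal hi)) e.
by rewrite /= !mkmE (tnth_nth x) /= nth_index.
Qed.

Lemma psi_U (k : fieldType) n (z w : dmonom n) : @psi k n z << w >> = hV k z w.
Proof. by rewrite /psi monalg.mmapU /= mpolyC1 mul1r. Qed.

Lemma psi_coef (k : fieldType) n (z u : dmonom n) (x : dpoly k n) :
  finsupp u `<=` finsupp z -> mpoly.mcoeff (mkm z u) (@psi k n z x) = monalg.mcoeff u x.
Proof.
move=> su; rewrite /psi monalg.mmapE raddf_sum /=.
rewrite (eq_bigr (fun w => if w == u then monalg.mcoeff w x else 0)); last first.
  move=> w _; rewrite mpoly.mcoeffCM /hV.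
  case sw: (finsupp w `<=` finsupp z); last first.
    rewrite mpoly.mcoeff0 mulr0; case: eqP => // ewu.
    by rewrite ewu su in sw.
  rewrite mpoly.mcoeffX; case: (eqVneq w u) => [->|ne]; first by rewrite eqxx mulr1.
  case: eqP => [/(mkm_inj sw su) ewu|_]; first by rewrite ewu eqxx in ne.
  by rewrite mulr0.
rewrite sum_delta ?fset_uniq //; case: ifP => // /negbT hu.
by rewrite monalg.mcoeff_outdom.
Qed.

Lemma mm_supp n (u v : dmonom n) : finsupp (mm u v) = finsupp u `|` finsupp v.
Proof. exact: mdomD. Qed.

Section Main2.
Variables (k : fieldType) (sigma : {rmorphism k -> k}) (n : nat) (I : dpoly k n -> Prop).
Local Notation s := (sigmaR sigma (n:=n)).
Local Notation C := (Cl sigma I).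
Local Notation J := (Jg sigma I).

Lemma psiD (z : dmonom n) (x y : dpoly k n) : (@psi k n z (x + y) = @psi k n z x + @psi k n z y)%R.
Proof. exact: rmorphD. Qed.
Lemma psiM (z : dmonom n) (x y : dpoly k n) : (@psi k n z (x * y) = @psi k n z x * @psi k n z y)%R.
Proof. exact: rmorphM. Qed.
Lemma psiX (z : dmonom n) (x : dpoly k n) e : @psi k n z (x ^+ e) = (@psi k n z x) ^+ e.
Proof. exact: rmorphXn. Qed.
Lemma psi0 (z : dmonom n) : @psi k n z (0 : dpoly k n) = 0.
Proof. exact: rmorph0. Qed.

Lemma psi_kill (z : dmonom n) (x : dpoly k n) : ~ C << z >> -> J x -> @psi k n z x = 0.
Proof.
move=> nz Jx; move: x Jx; apply: (ideal_gen_min (J := fun x => @psi k n z x = 0)).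
- split.
  + exact: psi0.
  + move=> x y hx hy; cbv beta in hx, hy |- *; by rewrite psiD hx hy addr0.
  + move=> r x hx; cbv beta in hx |- *; by rewrite psiM hx mulr0.
- move=> m [Cm [w em]]; cbv beta; rewrite em psi_U /hV.
  case: ifP => // sw; exfalso; apply: nz; apply: (Mo_div (w := w)) => //.
  by rewrite -em.
Qed.

Lemma J_rad : radical J.
Proof.
move=> a e Ja; apply: supp_J => u ua.
case: (classic (C << u >>)) => // nu; exfalso.
have := psi_kill nu Ja; rewrite psiX => /eqP; rewrite expf_eq0 => /andP [_ /eqP pa].
have := psi_coef a (fsubset_refl (finsupp u)); rewrite pa mpoly.mcoeff0 => /esym/eqP.
by rewrite monalg.mcoeff_eq0 ua.
Qed.

Lemma J_wm : well_mixed s J.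
Proof.
move=> a b Jab.
have key : forall u v, u \in monalg.msupp a -> v \in monalg.msupp b -> C << mm u v >>.
  move=> u v ua vb; case: (classic (C << mm u v >>)) => // nuv; exfalso.
  have := psi_kill nuv Jab; rewrite psiM => /eqP; rewrite mulf_eq0 => /orP [] /eqP p0.
  - have := psi_coef a (_ : finsupp u `<=` finsupp (mm u v)).
    rewrite p0 mpoly.mcoeff0 => /(_ ltac:(by rewrite mm_supp fsubsetUl)) /esym/eqP.
    by rewrite monalg.mcoeff_eq0 ua.
  - have := psi_coef b (_ : finsupp v `<=` finsupp (mm u v)).
    rewrite p0 mpoly.mcoeff0 => /(_ ltac:(by rewrite mm_supp fsubsetUr)) /esym/eqP.
    by rewrite monalg.mcoeff_eq0 vb.
have [_ _ JM] := ideal_gen_ideal (fun m => C m /\ is_monomial m).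
rewrite (mono_decomp a) /sigmaR mulr_suml; apply: ideal_sum; first exact: ideal_gen_ideal.
move=> u ua; rewrite mulr_sumr; apply: ideal_sum; first exact: ideal_gen_ideal.
move=> v vb. rewrite (mU_scal (sigma (monalg.mcoeff v b)) (shiftcm v)).
apply: J_term.
rewrite -mU_mul -(s_U sigma v); apply: C_wm; rewrite mU_mul; exact: key.
Qed.
End Main2.

Theorem corollary5p5 (k : fieldType) (sigma : {rmorphism k -> k})
  (hchar : [pchar k] =i pred0) (n : nat) (I : dpoly k n -> Prop) :
  is_sigma_ideal (sigmaR sigma (n:=n)) I -> monomial_ideal I ->
  is_sigma_ideal (sigmaR sigma (n:=n)) (rwm_closure (sigmaR sigma (n:=n)) I) /\
  monomial_ideal (rwm_closure (sigmaR sigma (n:=n)) I).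
Proof.
move=> hI mI; split.
  by split; [exact: C_ideal | exact: C_sigma].
move=> x; split.
- move=> Cx; apply: (Cx (Jg sigma I)).
  + by split; [exact: ideal_gen_ideal | exact: J_sigma].
  + exact: J_wm.
  + exact: J_rad.
  + by move=> y; exact: J_I.
- apply: ideal_gen_min; first exact: C_ideal.
  by move=> m [].
Qed.
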